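(* Let $S,T\subseteq\mathbb{Z}_{>0}$ be finite and let $x$ be such that $T_{\ge x}\preceq S_{>x}$. Then $$T\triangleleft S=(T_{<x}\triangleleft S_{\le x})\sqcup(T_{\ge x}\triangleleft S_{>x}).$$
   Context: For a finite set $S\subseteq\mathbb{Z}_{>0}$, $S(i)$ is its $i$th smallest element, and $S_{<x},S_{\le x},S_{>x},S_{\ge x}$ denote the subsets of elements $<x$, $\le x$, $>x$, $\ge x$. For finite $S,T$, $T\triangleleft S$ is computed by going through $S$ from largest to smallest; each $s$ picks the largest element of $T$ less than $s$ not yet picked (if one exists); $T\triangleleft S$ is the set of picked elements. We write $T\preceq S$ ($S$ dominates $T$) if $|T|\ge|S|$ and $T(i)<S(i)$ for all $i\in[|S|]$. *)

(* Defs.v *)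
From mathcomp Require Import all_boot all_order.
From mathcomp Require Import finmap.
Set Implicit Arguments. Unset Strict Implicit. Unset Printing Implicit Defensive.
Local Open Scope fset_scope.

(* S(i) : the i-th smallest element, 0-indexed here (S(i+1) in the paper). *)
Definition ith (S : {fset nat}) (i : nat) : nat := nth 0 (sort leq (enum_fset S)) i.

Definition fset_lt (S : {fset nat}) (x : nat) : {fset nat} := [fset s in S | s < x].
Definition fset_le (S : {fset nat}) (x : nat) : {fset nat} := [fset s in S | s <= x].
Definition fset_gt (S : {fset nat}) (x : nat) : {fset nat} := [fset s in S | x < s].
Definition fset_ge (S : {fset nat}) (x : nat) : {fset nat} := [fset s in S | x <= s].

(* Greedy matching: process the elements of S in the list ss (from largest to
   smallest); each s picks the largest not-yet-picked element of T below s. *)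
Fixpoint tri_aux (avail : {fset nat}) (ss : seq nat) : {fset nat} :=
  match ss with
  | [::] => fset0
  | s :: ss' =>
      let B := [fset t in avail | t < s] in
      if B == fset0 then tri_aux avail ss'
      else let m := \max_(t <- enum_fset B) t in
           m |` tri_aux (avail `\ m) ss'
  end.

Definition tri (T S : {fset nat}) : {fset nat} :=
  tri_aux T (sort geq (enum_fset S)).

Definition dominated (T S : {fset nat}) : Prop :=
  #|` S| <= #|` T| /\ forall i, i < #|` S| -> ith T i < ith S i.

(* Main.v *)
Require Import Defs.
From mathcomp Require Import all_boot all_order.
From mathcomp Require Import finmap.
From mathcomp Require Import zify.
Local Open Scope fset_scope.

Lemma cardE (A : {fset nat}) : #|` A| = size (enum_fset A).
Proof. by []. Qed.

Lemma max_spec (B : {fset nat}) : B != fset0 ->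
  (\max_(t <- enum_fset B) t) \in B /\ forall t, t \in B -> t <= \max_(t <- enum_fset B) t.
Proof.
move=> hB; split; last first.
  move=> t tB; exact: (@leq_bigmax_seq _ (enum_fset B) xpredT id t).
have : enum_fset B != [::].
  apply: contra hB => /eqP e; apply/eqP/fsetP => t; rewrite inE.
  by apply/negbTE; rewrite -[t \in B]/(t \in enum_fset B) e.
rewrite -[_ \in B]/(_ \in enum_fset B).
elim: (enum_fset B) => [|a l IH] // _.
rewrite big_cons inE; case: l IH => [|b l] IH.
  by rewrite big_nil maxn0 eqxx.
have := IH isT; rewrite /maxn; case: ltnP => _ h; by rewrite ?eqxx ?h ?orbT.
Qed.

Lemma tri_aux_sub A l t : t \in tri_aux A l -> t \in A.
Proof.
elim: l A => [|a l IH] A /=; first by rewrite inE.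
case: ifP => hB; first exact: IH.
have [mB _] := max_spec _ (negbT hB).
rewrite !inE => /orP [/eqP ->|/IH]; last by rewrite !inE => /andP [].
by move: mB; rewrite !inE => /andP [].
Qed.

Lemma tri_aux_cat A l1 l2 :
  tri_aux A (l1 ++ l2) = tri_aux A l1 `|` tri_aux (A `\` tri_aux A l1) l2.
Proof.
elim: l1 A => [|a l IH] A /=.
  by rewrite fset0U fsetD0.
case: ifP => hB; first exact: IH.
rewrite IH -fsetUA; congr (_ `|` (_ `|` tri_aux _ _)).
by apply/fsetP => t; rewrite !inE negb_or andbA [X in X && _]andbC.
Qed.

Lemma tri_low A l x : all (fun s => s <= x) l -> tri_aux A l = tri_aux (fset_lt A x) l.
Proof.
elim: l A => [|a l IH] A //= /andP [ax hl].
have eB : [fset t in A | t < a] = [fset t in fset_lt A x | t < a].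
  apply/fsetP => t; rewrite !inE; case: (t \in A) => //=.
  lia.
rewrite eB; case: ifP => _; first exact: IH.
congr (_ |` _); rewrite IH //; congr tri_aux.
by apply/fsetP => t; rewrite !inE andbA.
Qed.

Lemma geq_tr : transitive geq.
Proof. move=> a b c /= h1 h2; exact: leq_trans h2 h1. Qed.

Lemma split_sorted x (s : seq nat) : sorted geq s ->
  s = filter (fun y => x < y) s ++ filter (fun y => y <= x) s.
Proof.
elim: s => [|a s IH] //= hs.
have hs' := path_sorted hs.
case: (ltnP x a) => ha /=; first by rewrite -IH.
have hall := order_path_min geq_tr hs.
have -> : filter (fun y => x < y) s = [::].
  apply/eqP; rewrite -(negbK (_ == _)) -has_filter; apply/hasPn => y ys.
  by have := allP hall y ys; rewrite -leqNgt => /= ya; exact: leq_trans ya ha.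
have -> // : filter (fun y => y <= x) s = s.
apply/all_filterP/allP => y ys; have := allP hall y ys => /= ya; exact: leq_trans ya ha.
Qed.

Definition cnt x (A : {fset nat}) b := #|` [fset t in A | (x <= t) && (t < b)]|.
Definition Pinv x A (l : seq nat) :=
  forall p, p < size l -> size l - p <= cnt x A (nth 0 l p).

Lemma tri_high x A l : sorted geq l -> Pinv x A l ->
  tri_aux A l = tri_aux (fset_ge A x) l.
Proof.
elim: l A => [|a l IH] A //= hs hP.
have h0 := hP 0 isT; rewrite subn0 /= /cnt in h0.
have : [fset t in A | (x <= t) && (t < a)] != fset0.
  by rewrite -cardfs_gt0; apply: leq_trans h0.
case/fset0Pn => t0; rewrite !inE => /andP [t0A /andP [xt0 t0a]].
have hB : [fset t in A | t < a] != fset0.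
  by apply/fset0Pn; exists t0; rewrite !inE t0A.
have hB' : [fset t in fset_ge A x | t < a] != fset0.
  by apply/fset0Pn; exists t0; rewrite !inE t0A xt0.
have [mB mmax] := max_spec _ hB.
have [mB' mmax'] := max_spec _ hB'.
set m := \max_(_ <- enum_fset [fset t in A | t < a]) _ in mB mmax *.
set m' := \max_(_ <- enum_fset [fset t in fset_ge A x | t < a]) _ in mB' mmax' *.
have em : m = m'.
  apply/eqP; rewrite eqn_leq; apply/andP; split.
    apply: mmax'; move: mB; rewrite !inE => /andP [-> ->]; rewrite andbT /=.
    by apply: leq_trans xt0 (mmax t0 _); rewrite !inE t0A.
  move: mB'; rewrite /fset_ge !inE => /andP [/andP [mA _] ma]; apply: mmax; by rewrite !inE mA ma.
rewrite (negbTE hB) (negbTE hB') -em; congr (_ |` _).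
have -> : fset_ge A x `\ m = fset_ge (A `\ m) x.
  by apply/fsetP => t; rewrite /fset_ge !inE andbA.
apply: IH; first exact: path_sorted hs.
move=> p hp; have := hP p.+1 hp; rewrite /= subSS /cnt.
set b := nth 0 l p.
have hb : b <= a by have := allP (order_path_min geq_tr hs) b (mem_nth 0 hp).
have -> : [fset t in A `\ m | x <= t < b] = [fset t in A | x <= t < b] `\ m.
  by apply/fsetP => t; rewrite !inE; case: (t \in A); case: (t == m).
case: (ltnP m b) => hmb.
  have -> : [fset t in A | x <= t < b] = [fset t in A | x <= t < a].
    apply/fsetP => t; rewrite !inE; case tA: (t \in A) => //=.
    apply/idP/idP => /andP [xt tb]; rewrite xt /=; first by apply: leq_trans tb hb.
    have := mmax t; rewrite !inE tA tb => /(_ isT); lia.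
  move=> _; move: h0; rewrite (cardfsD1 m [fset t in A | x <= t < a]).
  case: (m \in _) => /=; lia.
have hm : m \notin [fset t in A | x <= t < b] by rewrite !inE; lia.
by rewrite (cardfsD1 m [fset t in A | x <= t < b]) (negbTE hm).
Qed.

Lemma geq_anti : antisymmetric geq.
Proof. move=> a b /andP [h1 h2]; apply/eqP; rewrite eqn_leq; by apply/andP. Qed.

Lemma geq_total : total geq.
Proof. move=> a b; exact: leq_total. Qed.

Lemma sort_geq_rev (s : seq nat) : sort geq s = rev (sort leq s).
Proof.
apply: (sorted_eq geq_tr geq_anti).
- exact: (sort_sorted geq_total).
- rewrite (rev_sorted geq); exact (@sort_sorted _ leq leq_total s).
- by rewrite perm_sort perm_sym perm_rev perm_sort.
Qed.

Lemma init_inv x T S' : dominated (fset_ge T x) S' -> Pinv x T (sort geq (enum_fset S')).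
Proof.
move=> [hc hd] p; rewrite sort_geq_rev size_rev size_sort -cardE => hp.
rewrite nth_rev ?size_sort -?cardE //.
set i := #|` S'| - p.+1.
have hi : i < #|` S'| by rewrite /i; lia.
have -> : #|` S'| - p = i.+1 by rewrite /i; lia.
have := hd i hi; rewrite /ith => hlt.
set LT := sort leq (enum_fset (fset_ge T x)) in hlt.
have hsz : size LT = #|` fset_ge T x| by rewrite size_sort.
have hsorted : sorted leq LT by exact (@sort_sorted _ leq leq_total _).
have -> : i.+1 = size (take i.+1 LT) by rewrite size_take; case: ifP => //; lia.
rewrite /cnt; apply: uniq_leq_size.
  by apply: take_uniq; rewrite sort_uniq; exact: fset_uniq.
move=> y /(nthP 0) [j]; rewrite size_take => hj <-.
have hjL : j < size LT by move: hj; case: ifP => hh; lia.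
have hjx : j <= i by move: hj; case: ifP => hh; lia.
rewrite nth_take; last by move: hj; case: ifP => hh; lia.
have : nth 0 LT j \in LT by exact: mem_nth.
rewrite mem_sort => hin.
have hin' : nth 0 LT j \in fset_ge T x by [].
move: hin'; rewrite /fset_ge !inE => /andP [-> ->] /=.
apply: leq_ltn_trans hlt.
apply: (sorted_leq_nth leq_trans leqnn 0 hsorted) => //; rewrite inE; lia.
Qed.

Lemma split_S x (S : {fset nat}) : sort geq (enum_fset S) =
  sort geq (enum_fset (fset_gt S x)) ++ sort geq (enum_fset (fset_le S x)).
Proof.
rewrite {1}(@split_sorted x _ (sort_sorted geq_total _)).
rewrite !(filter_sort geq_total geq_tr).
congr (_ ++ _); apply/(perm_sortP geq_total geq_tr geq_anti);
  (apply: uniq_perm; [by rewrite filter_uniq // fset_uniq | exact: fset_uniq |]);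
  by move=> t; rewrite mem_filter /fset_gt /fset_le !inE andbC.
Qed.

Theorem proposition4p12 (S T : {fset nat}) (x : nat) :
  (forall s, s \in S -> 0 < s) ->
  (forall t, t \in T -> 0 < t) ->
  dominated (fset_ge T x) (fset_gt S x) ->
  tri T S = tri (fset_lt T x) (fset_le S x) `|` tri (fset_ge T x) (fset_gt S x)
  /\ tri (fset_lt T x) (fset_le S x) `&` tri (fset_ge T x) (fset_gt S x) = fset0.
Proof.
move=> _ _ hdom.
rewrite /tri (split_S x S) tri_aux_cat.
set sH := sort geq (enum_fset (fset_gt S x)).
set sL := sort geq (enum_fset (fset_le S x)).
set H := tri_aux T sH.
have eH : H = tri_aux (fset_ge T x) sH.
  apply: tri_high; [exact: (sort_sorted geq_total) | exact: init_inv].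
have Hge : forall t, t \in H -> x <= t.
  by move=> t; rewrite eH => /tri_aux_sub; rewrite /fset_ge inE => /andP [_ ->].
have hall : all (fun s => s <= x) sL.
  by apply/allP => t; rewrite mem_sort /fset_le !inE => /andP [].
rewrite (@tri_low _ _ _ hall).
have -> : fset_lt (T `\` H) x = fset_lt T x.
  apply/fsetP => t; rewrite /fset_lt !inE; case tH: (t \in H) => //=.
  by have := Hge t tH; case: (t \in T) => /=; lia.
split; first by rewrite -eH fsetUC.
apply/fsetP => t; rewrite !inE; apply/negbTE; apply/negP => /andP [h1 h2].
have := @tri_aux_sub _ _ _ h1; rewrite /fset_lt inE => /andP [_ tx].
have := @tri_aux_sub _ _ _ h2; rewrite /fset_ge inE => /andP [_ xt].
lia.
Qed.
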